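(* For any connected graphs $G$ and $H$, $v_s(G)\,v_s(H) \le Z(G \Box H)$.
   Context: A strong support vertex is a vertex adjacent to at least two leaves; $v_s(G)$ is the number of strong support vertices of $G$. Zero forcing: starting from a set $Z \subseteq V(G)$ of observed vertices, repeatedly any vertex that is the only unobserved neighbor of some observed vertex becomes observed; $Z$ is a zero forcing set if eventually all vertices are observed, and $Z(G)$ is the minimum size of a zero forcing set. $G\Box H$ is the Cartesian product: vertex set $V(G)\times V(H)$, with $(g_1,h_1)\sim(g_2,h_2)$ iff ($g_1=g_2$ and $h_1h_2\in E(H)$) or ($h_1=h_2$ and $g_1g_2\in E(G)$). *)

(* Defs.v *)
From mathcomp Require Import all_boot.
Set Implicit Arguments. Unset Strict Implicit. Unset Printing Implicit Defensive.

Definition simple_graph (T : finType) (e : rel T) : Prop :=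
  symmetric e /\ irreflexive e.

Definition connected_graph (T : finType) (e : rel T) : Prop :=
  forall x y : T, connect e x y.

Definition nbhd (T : finType) (e : rel T) (v : T) : {set T} := [set w | e v w].

Definition deg (T : finType) (e : rel T) (v : T) : nat := #|nbhd e v|.

Definition leaf (T : finType) (e : rel T) (v : T) : bool := deg e v == 1.

Definition strong_support (T : finType) (e : rel T) (v : T) : bool :=
  1 < #|[set w in nbhd e v | leaf e w]|.

Definition vs (T : finType) (e : rel T) : nat := #|[set v | strong_support e v]|.

Definition force_step (T : finType) (e : rel T) (S : {set T}) : {set T} :=
  S :|: [set w | [exists v in S, (w \in nbhd e v) && (nbhd e v :\: S == [set w])]].

(* The final set of observed vertices (the process stabilises after at
   most #|T| rounds). *)
Definition zf_closure (T : finType) (e : rel T) (Z : {set T}) : {set T} :=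
  iter #|T| (force_step e) Z.

Definition zero_forcing_set (T : finType) (e : rel T) (Z : {set T}) : bool :=
  zf_closure e Z == [set: T].

(* Z(G): the minimum size of a zero forcing set ([set: T] is one). *)
Definition zf_number (T : finType) (e : rel T) : nat :=
  #|[arg min_(Z < [set: T] | zero_forcing_set e Z) #|Z|]|.

Definition cart_prod (T1 T2 : finType) (e1 : rel T1) (e2 : rel T2) : rel (T1 * T2) :=
  fun x y => ((x.1 == y.1) && e2 x.2 y.2) || ((x.2 == y.2) && e1 x.1 y.1).

(* Main.v *)
Require Import Defs.
From mathcomp Require Import all_boot zify.
Set Implicit Arguments. Unset Strict Implicit. Unset Printing Implicit Defensive.

Definition Lset (T : finType) (e : rel T) (u : T) : {set T} :=
  [set w in nbhd e u | leaf e w].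

Lemma leaf_nbhd (T : finType) (e : rel T) u w :
  symmetric e -> w \in Lset e u -> nbhd e w = [set u].
Proof.
move=> sym; rewrite inE => /andP [wu lw].
have [x Hx] := cards1P lw.
have : u \in nbhd e w by rewrite inE sym; rewrite inE in wu.
by rewrite Hx inE => /eqP ->.
Qed.

Lemma other_elt (T : finType) (A : {set T}) m :
  1 < #|A| -> exists2 m', m' \in A & m' != m.
Proof.
move=> H; have : 0 < #|A :\ m|.
  by move: H; rewrite (cardsD1 m A); case: (m \in A) => /=; lia.
rewrite card_gt0 => /set0Pn [m' ]; rewrite !inE => /andP [H1 H2].
by exists m'.
Qed.

Section S.
Variables (T1 T2 : finType) (e1 : rel T1) (e2 : rel T2).
Hypotheses (sym1 : symmetric e1) (sym2 : symmetric e2).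

Definition Sq (p : T1 * T2) := setX (Lset e1 p.1) (Lset e2 p.2).

Lemma step_pres p (S : {set T1 * T2}) :
  1 < #|Lset e1 p.1| -> 1 < #|Lset e2 p.2| ->
  (forall w, w \in Sq p -> w \notin S) ->
  (forall w, w \in Sq p -> w \notin force_step (cart_prod e1 e2) S).
Proof.
case: p => u v /= H1 H2 Hinv [l m] Hw.
have Hw' := Hw; rewrite /Sq inE /= in Hw'; case/andP: Hw' => Hl Hm.
rewrite /force_step !inE negb_or (negbTE (Hinv _ Hw)) /=.
apply/existsP => -[x /andP [xS /andP [wx /eqP Hx]]].
rewrite inE /cart_prod /= in wx.
case/orP: wx => /andP [/eqP ex ee].
- have xv : x.2 = v.
    have : x.2 \in nbhd e2 m by rewrite inE sym2.
    by rewrite (leaf_nbhd sym2 Hm) inE => /eqP.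
  have [m' Hm' nm] := other_elt m H2.
  have : (l, m') \in nbhd (cart_prod e1 e2) x :\: S.
    have Hsq : (l, m') \in Sq (u, v) by rewrite /Sq inE /= Hl Hm'.
    rewrite !inE /cart_prod /= ex eqxx xv /= (Hinv _ Hsq) /=.
    by rewrite inE in Hm'; case/andP: Hm'; rewrite inE => -> _.
  by rewrite Hx inE xpair_eqE eqxx /= (negbTE nm).
- have xu : x.1 = u.
    have : x.1 \in nbhd e1 l by rewrite inE sym1.
    by rewrite (leaf_nbhd sym1 Hl) inE => /eqP.
  have [l' Hl' nl] := other_elt l H1.
  have : (l', m) \in nbhd (cart_prod e1 e2) x :\: S.
    have Hsq : (l', m) \in Sq (u, v) by rewrite /Sq inE /= Hl' Hm.
    rewrite !inE /cart_prod /= ex eqxx xu /= (Hinv _ Hsq) /= orbC.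
    by rewrite inE in Hl'; case/andP: Hl'; rewrite inE => -> _.
  by rewrite Hx inE xpair_eqE eqxx /= andbT (negbTE nl).
Qed.

Lemma iter_pres p (S : {set T1 * T2}) n :
  1 < #|Lset e1 p.1| -> 1 < #|Lset e2 p.2| ->
  (forall w, w \in Sq p -> w \notin S) ->
  (forall w, w \in Sq p -> w \notin iter n (force_step (cart_prod e1 e2)) S).
Proof.
move=> H1 H2 H; elim: n => [|n IH] //=.
exact: step_pres.
Qed.

Lemma zf_meets p (Z : {set T1 * T2}) :
  1 < #|Lset e1 p.1| -> 1 < #|Lset e2 p.2| ->
  zero_forcing_set (cart_prod e1 e2) Z -> Z :&: Sq p != set0.
Proof.
move=> H1 H2 HZ; apply/negP => /eqP H0.
have [l Hl _] := other_elt p.1 H1.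
have [m Hm _] := other_elt p.2 H2.
have Hsq : (l, m) \in Sq p by rewrite /Sq inE /= Hl Hm.
have inv : forall w, w \in Sq p -> w \notin Z.
  move=> w Hw; apply/negP => wZ.
  by move: H0 => /setP /(_ w); rewrite inE wZ Hw inE.
move: HZ; rewrite /zero_forcing_set /zf_closure => /eqP HZ.
by have := @iter_pres p Z #|{: T1 * T2}| H1 H2 inv _ Hsq; rewrite HZ inE.
Qed.
End S.

Lemma setT_zf (T : finType) (e : rel T) : zero_forcing_set e [set: T].
Proof.
rewrite /zero_forcing_set /zf_closure; apply/eqP.
elim: #|T| => [|n IH] //=; rewrite IH.
by apply/eqP; rewrite eqEsubset subsetT /force_step subsetUl.
Qed.

Theorem corollary3p6 (T1 T2 : finType) (e1 : rel T1) (e2 : rel T2) :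
  simple_graph e1 -> simple_graph e2 ->
  connected_graph e1 -> connected_graph e2 ->
  vs e1 * vs e2 <= zf_number (cart_prod e1 e2).
Proof.
move=> [sym1 _] [sym2 _] _ _.
rewrite /zf_number.
case: arg_minnP; first exact: setT_zf.
move=> Z HZ _.
set A := setX [set v | strong_support e1 v] [set v | strong_support e2 v].
have -> : vs e1 * vs e2 = #|A| by rewrite cardsX.
pose f p := odflt p [pick z in Z :&: Sq e1 e2 p].
have fP : forall p, p \in A -> f p \in Z :&: Sq e1 e2 p.
  move=> [u v] Hp; have := Hp; rewrite in_setX => /andP [H1 H2]; rewrite inE /= in H1; rewrite inE /= in H2.
  rewrite /f; case: pickP => [z Hz|H] //=.
  have := @zf_meets _ _ _ _ sym1 sym2 (u, v) Z H1 H2 HZ.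
  by case/set0Pn => y Hy; move: (H y); rewrite Hy.
rewrite -(card_in_imset (f := f)).
  apply: subset_leq_card; apply/subsetP => _ /imsetP [p Hp ->].
  by have := fP p Hp; rewrite inE => /andP [].
move=> [u v] [u' v'] Hp Hq Heq.
have := fP _ Hp; have := fP _ Hq; rewrite Heq; move: (f (u', v')) => z.
case: z => z1 z2; rewrite /Sq !in_setI !in_setX /=.
case/and3P => _ a1 a2; case/and3P => _ b1 b2.
have := leaf_nbhd sym1 a1; rewrite (leaf_nbhd sym1 b1) => /set1_inj ->.
by have := leaf_nbhd sym2 a2; rewrite (leaf_nbhd sym2 b2) => /set1_inj ->.
Qed.
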